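(* There exists a $5\times 5$ pandiagonal magic square $A$ whose twenty-five entries are pairwise distinct strings of length $4$ over $\{0,1,2\}$ (read as decimal numbers, leading zeros allowed), with magic sum $S1=5555$, such that the rotated array $R(A)$ is also a magic square with magic sum $5555$.
   Context: A magic square of order $n$ is an $n\times n$ array of numbers in which the sums of the entries of each row, of each column and of each of the two principal diagonals all equal a common value $S1$ (the magic sum). It is pandiagonal if moreover all $2n$ broken diagonals (the sets $\{(i,j): j-i\equiv c \pmod n\}$ and $\{(i,j): i+j\equiv c\pmod n\}$) have sum $S1$. For an $n\times n$ array $A$ whose entries are digit strings $d_1d_2\cdots d_k$ over $\{0,1,2\}$, the rotated array $R(A)$ is defined by $R(A)_{i,j}=\overline{A_{n+1-i,\,n+1-j}}$, where $\overline{d_1\cdots d_k}=d_k\cdots d_1$. Strings are interpreted as decimal integers. *)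

(* Defs.v *)
From mathcomp Require Import all_boot.
Set Implicit Arguments. Unset Strict Implicit. Unset Printing Implicit Defensive.

(* A digit string d_1 d_2 ... d_k is a list of digits (most significant first). *)
Definition digstr := seq nat.

Definition decval (s : digstr) : nat := foldl (fun acc d => acc * 10 + d) 0 s.

Definition ternary_string (k : nat) (s : digstr) : bool :=
  (size s == k) && all (fun d => d < 3) s.

Definition array (n : nat) := 'I_n -> 'I_n -> nat.

Definition row_sum n (M : array n) (i : 'I_n) := \sum_(j < n) M i j.
Definition col_sum n (M : array n) (j : 'I_n) := \sum_(i < n) M i j.
Definition diag_sum n (M : array n) := \sum_(i < n) M i i.
Definition antidiag_sum n (M : array n) := \sum_(i < n) M i (rev_ord i).

Definition is_magic n (M : array n) (S1 : nat) : Prop :=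
  (forall i, row_sum M i = S1) /\ (forall j, col_sum M j = S1) /\
  diag_sum M = S1 /\ antidiag_sum M = S1.

Definition broken_diag_sum n (M : array n) (c : nat) :=
  \sum_(i < n) \sum_(j < n | (j + n - i) %% n == c %% n) M i j.
Definition broken_antidiag_sum n (M : array n) (c : nat) :=
  \sum_(i < n) \sum_(j < n | (i + j) %% n == c %% n) M i j.

Definition is_pandiagonal_magic n (M : array n) (S1 : nat) : Prop :=
  is_magic M S1 /\
  (forall c, c < n -> broken_diag_sum M c = S1) /\
  (forall c, c < n -> broken_antidiag_sum M c = S1).

Definition val_array n (A : 'I_n -> 'I_n -> digstr) : array n :=
  fun i j => decval (A i j).

(* rotated array: R(A)_{i,j} = reverse of A_{n+1-i, n+1-j} (1-based) *)
Definition rot_array n (A : 'I_n -> 'I_n -> digstr) : 'I_n -> 'I_n -> digstr :=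
  fun i j => rev (A (rev_ord i) (rev_ord j)).

(* Main.v *)
Require Import Defs.
From mathcomp Require Import all_boot.

Definition tab : seq (seq digstr) :=
  [:: [:: [:: 1; 1; 0; 2]; [:: 1; 2; 2; 1]; [:: 2; 1; 2; 2]; [:: 1; 0; 0; 0]; [:: 0; 1; 1; 0]];
  [:: [:: 1; 0; 2; 2]; [:: 0; 1; 0; 0]; [:: 1; 1; 1; 0]; [:: 1; 2; 0; 2]; [:: 2; 1; 2; 1]];
  [:: [:: 1; 2; 1; 0]; [:: 2; 1; 0; 2]; [:: 1; 0; 2; 1]; [:: 0; 1; 2; 2]; [:: 1; 1; 0; 0]];
  [:: [:: 0; 1; 2; 1]; [:: 1; 1; 2; 2]; [:: 1; 2; 0; 0]; [:: 2; 1; 1; 0]; [:: 1; 0; 0; 2]];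
  [:: [:: 2; 1; 0; 0]; [:: 1; 0; 1; 0]; [:: 0; 1; 0; 2]; [:: 1; 1; 2; 1]; [:: 1; 2; 2; 2]]].

Definition Aex (i j : 'I_5) : digstr := nth [::] (nth [::] tab i) j.

Ltac ordc i := let H := fresh in case: i => [[|[|[|[|[|?]]]]] H] //.
Definition o0 : 'I_5 := @Ordinal 5 0 isT.
Definition o1 : 'I_5 := @Ordinal 5 1 isT.
Definition o2 : 'I_5 := @Ordinal 5 2 isT.
Definition o3 : 'I_5 := @Ordinal 5 3 isT.
Definition o4 : 'I_5 := @Ordinal 5 4 isT.

Lemma sum5 (P : pred 'I_5) (F : 'I_5 -> nat) :
  \sum_(j < 5 | P j) F j =
  (if P o0 then F o0 else 0) + (if P o1 then F o1 else 0) +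
  (if P o2 then F o2 else 0) + (if P o3 then F o3 else 0) +
  (if P o4 then F o4 else 0).
Proof.
  rewrite big_mkcond !big_ord_recr big_ord0 /=.
  rewrite add0n; repeat congr (_ + _); congr (if P _ then F _ else 0); by apply: val_inj.
Qed.

Ltac sums := rewrite /row_sum /col_sum /diag_sum /antidiag_sum
  /broken_diag_sum /broken_antidiag_sum;
  rewrite !sum5; vm_compute; reflexivity.

Theorem mainTheorem3 :
  exists A : 'I_5 -> 'I_5 -> digstr,
    (forall i j, ternary_string 4 (A i j)) /\
    (forall i j i' j', A i j = A i' j' -> i = i' /\ j = j') /\
    is_pandiagonal_magic (val_array A) 5555 /\
    is_magic (val_array (rot_array A)) 5555.
Proof.
  exists Aex; split; [|split; [|split]].
  - move=> i j; ordc i; ordc j.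
  - move=> i j i' j'; ordc i; ordc j; ordc i'; ordc j'; move=> E; vm_compute in E; try discriminate E;
      split; apply/val_inj; reflexivity.
  - split; [split; [|split; [|split]]|split].
    + move=> i; ordc i; sums.
    + move=> i; ordc i; sums.
    + sums.
    + sums.
    + move=> c; case: c => [|[|[|[|[|?]]]]] // _; sums.
    + move=> c; case: c => [|[|[|[|[|?]]]]] // _; sums.
  - split; [|split; [|split]].
    + move=> i; ordc i; sums.
    + move=> i; ordc i; sums.
    + sums.
    + sums.
Qed.
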